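(* Let $\mathcal{E}=\langle\mathrm{Env},A,\Rightarrow\rangle$ be an environment LTS and $\mathcal{P}=\langle\mathrm{Pr},A,\to\rangle$ a process LTS such that $\mathcal{P}$ contains a universal process, contains $\mathcal{E}$ (i.e. $\mathrm{Env}\subseteq\mathrm{Pr}$ with the same transitions), and is closed under joins. Then for all environments $e,f\in\mathrm{Env}$ (not necessarily image-finite): (1) $e\le f \iff\ \le^{ji}_f\ \subseteq\ \le^{ji}_e$; (2) $e\le f \iff\ \ge^{ji}_f\ \subseteq\ \ge^{ji}_e$, where $\ge^{ji}_g$ is the converse of $\le^{ji}_g$; (3) $e\le f \iff\ \simeq^{ji}_f\ \subseteq\ \simeq^{ji}_e$.
   Context: A labeled transition system (LTS) is a triple $\langle \mathrm{St},A,\to\rangle$ with states, actions, and transitions $s\xrightarrow{a}t$. A process LTS $\mathcal{P}=\langle \mathrm{Pr},A,\to\rangle$ has states called processes; an environment LTS $\mathcal{E}=\langle\mathrm{Env},A,\Rightarrow\rangle$ has states called environments, transitions $e\xRightarrow{a}e'$. A simulation is a nonempty relation $S$ on states such that $s\,S\,t$ and $s\xrightarrow{a}s'$ imply some $t\xrightarrow{a}t'$ with $s'\,S\,t'$; $s\le t$ iff some simulation relates $s$ to $t$; a bisimulation is a relation $B$ with $B$ and its converse simulations, and $\sim$ is bisimilarity. A process $u\in\mathrm{Pr}$ is universal if for every $a\in A$ there is a transition $u\xrightarrow{a}u'$ with $u'\sim u$. $\mathcal{P}$ is closed under joins if for all $s_1,s_2\in\mathrm{Pr}$ there is $s_1\mathbin{\&}s_2\in\mathrm{Pr}$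 whose transitions are exactly $s_1\mathbin{\&}s_2\xrightarrow{a}s_1'\mathbin{\&}s_2'$ for $s_1\xrightarrow{a}s_1'$, $s_2\xrightarrow{a}s_2'$. The join LTS $\mathcal{P}\mathbin{\&}\mathcal{E}$ has states $p\mathbin{\&}e$ and transitions $p\mathbin{\&}e\xrightarrow{a}p'\mathbin{\&}e'$ iff $p\xrightarrow{a}p'$ and $e\xRightarrow{a}e'$. $p\le^{ji}_e q$ iff $p\mathbin{\&}e\le q\mathbin{\&}e$; $p\simeq^{ji}_e q$ iff $p\le^{ji}_e q$ and $q\le^{ji}_e p$. *)

(* Defs.v *)
Definition is_simulation {St A : Type} (step : St -> A -> St -> Prop)
  (R : St -> St -> Prop) : Prop :=
  (exists s t, R s t) /\
  forall s t a s', R s t -> step s a s' -> exists t', step t a t' /\ R s' t'.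

Definition simulated {St A : Type} (step : St -> A -> St -> Prop) (s t : St) : Prop :=
  exists R, is_simulation step R /\ R s t.

Definition bisimilar {St A : Type} (step : St -> A -> St -> Prop) (s t : St) : Prop :=
  exists B, is_simulation step B /\ is_simulation step (fun x y => B y x) /\ B s t.

Definition universal {Pr A : Type} (pstep : Pr -> A -> Pr -> Prop) (u : Pr) : Prop :=
  forall a, exists u', pstep u a u' /\ bisimilar pstep u' u.

(* The process LTS contains the environment LTS: Env is (via the injective
   embedding emb) a subset of Pr with exactly the same transitions. *)
Definition contains_env {Pr Env A : Type} (pstep : Pr -> A -> Pr -> Prop)
  (estep : Env -> A -> Env -> Prop) (emb : Env -> Pr) : Prop :=
  (forall e1 e2, emb e1 = emb e2 -> e1 = e2) /\
  (forall e a e', estep e a e' <-> pstep (emb e) a (emb e')) /\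
  (forall e a p', pstep (emb e) a p' -> exists e', p' = emb e').

Definition join_op {Pr A : Type} (pstep : Pr -> A -> Pr -> Prop)
  (jn : Pr -> Pr -> Pr) : Prop :=
  forall s1 s2 a t, pstep (jn s1 s2) a t <->
    exists s1' s2', pstep s1 a s1' /\ pstep s2 a s2' /\ t = jn s1' s2'.

Definition closed_under_joins {Pr A : Type} (pstep : Pr -> A -> Pr -> Prop) : Prop :=
  exists jn, join_op pstep jn.

(* The join LTS P & E, with states the pairs (p, e) written p & e. *)
Definition join_step {Pr Env A : Type} (pstep : Pr -> A -> Pr -> Prop)
  (estep : Env -> A -> Env -> Prop) (x : Pr * Env) (a : A) (y : Pr * Env) : Prop :=
  pstep (fst x) a (fst y) /\ estep (snd x) a (snd y).

Definition le_ji {Pr Env A : Type} (pstep : Pr -> A -> Pr -> Prop)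
  (estep : Env -> A -> Env -> Prop) (e : Env) (p q : Pr) : Prop :=
  simulated (join_step pstep estep) (p, e) (q, e).

Definition ge_ji {Pr Env A : Type} (pstep : Pr -> A -> Pr -> Prop)
  (estep : Env -> A -> Env -> Prop) (e : Env) (p q : Pr) : Prop :=
  le_ji pstep estep e q p.

Definition eq_ji {Pr Env A : Type} (pstep : Pr -> A -> Pr -> Prop)
  (estep : Env -> A -> Env -> Prop) (e : Env) (p q : Pr) : Prop :=
  le_ji pstep estep e p q /\ le_ji pstep estep e q p.

Definition rel_incl {X : Type} (R S : X -> X -> Prop) : Prop :=
  forall x y, R x y -> S x y.

(* Main.v *)
Require Import Defs.

Section Gen.
Context {St A : Type} (step : St -> A -> St -> Prop).

Lemma sim_intro (R : St -> St -> Prop) s t :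
  R s t ->
  (forall s t a s', R s t -> step s a s' -> exists t', step t a t' /\ R s' t') ->
  simulated step s t.
Proof. intros H1 H2. exists R. split; [split; [eauto|exact H2]|exact H1]. Qed.

Lemma sim_step s t a s' : simulated step s t -> step s a s' ->
  exists t', step t a t' /\ simulated step s' t'.
Proof.
  intros [R [[_ HR] Hst]] Hs. destruct (HR _ _ _ _ Hst Hs) as [t' [H1 H2]].
  exists t'. split; [exact H1|]. exists R. split; [split; [eauto|exact HR]|exact H2].
Qed.

Lemma sim_trans x y z : simulated step x y -> simulated step y z -> simulated step x z.
Proof.
  intros H1 H2.
  apply (sim_intro (fun a c => exists b, simulated step a b /\ simulated step b c)).
  - eauto.
  - intros s t a s' [b [Hsb Hbt]] Hs.
    destruct (sim_step _ _ _ _ Hsb Hs) as [b' [Hb Hsb']].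
    destruct (sim_step _ _ _ _ Hbt Hb) as [t' [Ht Hbt']].
    eauto.
Qed.

Lemma bisim_sim_conv x y : bisimilar step x y -> simulated step y x.
Proof. intros [B [_ [HB Hxy]]]. exists (fun x y => B y x). auto. Qed.
End Gen.

Theorem theorem3p14 (A Pr Env : Type)
  (pstep : Pr -> A -> Pr -> Prop) (estep : Env -> A -> Env -> Prop)
  (emb : Env -> Pr)
  (Huniv : exists u : Pr, universal pstep u)
  (Hcont : contains_env pstep estep emb)
  (Hjoin : closed_under_joins pstep) :
  forall e f : Env,
    (simulated estep e f <-> rel_incl (le_ji pstep estep f) (le_ji pstep estep e)) /\
    (simulated estep e f <-> rel_incl (ge_ji pstep estep f) (ge_ji pstep estep e)) /\
    (simulated estep e f <-> rel_incl (eq_ji pstep estep f) (eq_ji pstep estep e)).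
Proof.
  destruct Huniv as [u Hu]. destruct Hcont as [Hinj [Hiff Hcl]].
  destruct Hjoin as [jn Hj].
  assert (Htop : forall x, simulated pstep x u).
  { intro x. apply (sim_intro pstep (fun _ b => simulated pstep u b)).
    - exists (fun a b => a = b). split; [split; [exists x, x; reflexivity|]|reflexivity].
      intros s t a s' -> H; eauto.
    - intros s t a s' Ht _. destruct (Hu a) as [u1 [Hu1 Hb]].
      destruct (sim_step _ _ _ _ _ Ht Hu1) as [t' [Ht' Hs']].
      exists t'. split; [exact Ht'|]. eapply sim_trans; [|exact Hs'].
      eapply bisim_sim_conv; exact Hb. }
  assert (Hrefl : forall x, simulated pstep x x).
  { intro x. exists (fun a b => a = b). split; [split; [exists x, x; reflexivity|]|reflexivity].
    intros s t a s' -> H; eauto. }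
  assert (Hjl : forall x y, simulated pstep (jn x y) x).
  { intros x y. apply (sim_intro pstep (fun a b => exists y, a = jn b y)); [eauto|].
    intros s t a s' [y' ->] Hs. apply Hj in Hs.
    destruct Hs as [s1 [s2 [H1 [H2 ->]]]]. eauto. }
  assert (Hchar : forall e p q, le_ji pstep estep e p q <-> simulated pstep (jn p (emb e)) q).
  { intros e p q. split.
    - intro H. eapply sim_trans; [|apply (Hjl q (emb e))].
      apply (sim_intro pstep (fun x y => exists p' q' e1 e2, x = jn p' (emb e1) /\
         y = jn q' (emb e2) /\ simulated (join_step pstep estep) (p', e1) (q', e2))).
      + exists p, q, e, e. auto.
      + intros s t a s' [p' [q' [e1 [e2 [-> [-> Hs]]]]]] Hst.
        apply Hj in Hst. destruct Hst as [p'' [s2 [Hp [He ->]]]].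
        destruct (Hcl _ _ _ He) as [e1' ->]. apply Hiff in He.
        destruct (sim_step _ _ _ _ _ Hs (conj Hp He : join_step pstep estep (p', e1) a (p'', e1')))
          as [[q'' e2'] [[Hq He2] Hs']].
        simpl in Hq, He2.
        exists (jn q'' (emb e2')). split.
        * apply Hj. exists q'', (emb e2'). split; [exact Hq|]. split; [apply Hiff; exact He2|reflexivity].
        * exists p'', q'', e1', e2'. auto.
    - intro H. unfold le_ji.
      apply (sim_intro _ (fun x y => snd x = snd y /\ simulated pstep (jn (fst x) (emb (snd x))) (fst y))).
      + simpl. auto.
      + intros [x e1] [y e2] a [x' e1'] [Heq Hs] [Hx He]. simpl in *. subst e2.
        assert (Hst : pstep (jn x (emb e1)) a (jn x' (emb e1'))).
        { apply Hj. exists x', (emb e1'). split; [exact Hx|]. split; [apply Hiff; exact He|reflexivity]. }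
        destruct (sim_step _ _ _ _ _ Hs Hst) as [y' [Hy Hs']].
        exists (y', e1'). split; [split; assumption|]. simpl. auto. }
  assert (Hmono : forall p e f, simulated estep e f ->
             simulated pstep (jn p (emb e)) (jn p (emb f))).
  { intros p e f H.
    apply (sim_intro pstep (fun x y => exists p' e1 f1, x = jn p' (emb e1) /\
         y = jn p' (emb f1) /\ simulated estep e1 f1)).
    - exists p, e, f. auto.
    - intros s t a s' [p' [e1 [f1 [-> [-> Hs]]]]] Hst.
      apply Hj in Hst. destruct Hst as [p'' [s2 [Hp [He ->]]]].
      destruct (Hcl _ _ _ He) as [e1' ->]. apply Hiff in He.
      destruct (sim_step _ _ _ _ _ Hs He) as [f1' [Hf Hs']].
      exists (jn p'' (emb f1')). split.
      + apply Hj. exists p'', (emb f1'). split; [exact Hp|]. split; [apply Hiff; exact Hf|reflexivity].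
      + eauto 6. }
  assert (Hue : forall e, simulated pstep (emb e) (jn u (emb e))).
  { intro e.
    apply (sim_intro pstep (fun x y => exists u' e', x = emb e' /\ y = jn u' (emb e') /\
         simulated pstep u u')).
    - exists u, e. auto.
    - intros s t a s' [u' [e' [-> [-> Hs]]]] Hst.
      destruct (Hcl _ _ _ Hst) as [e'' ->].
      destruct (Hu a) as [u1 [Hu1 Hb]].
      destruct (sim_step _ _ _ _ _ Hs Hu1) as [u'' [Hu'' Hs']].
      exists (jn u'' (emb e'')). split.
      + apply Hj. exists u'', (emb e''). auto.
      + exists u'', e''. split; [reflexivity|]. split; [reflexivity|].
        eapply sim_trans; [|exact Hs']. eapply bisim_sim_conv; exact Hb. }
  assert (Hrefl_emb : forall e f, simulated pstep (emb e) (emb f) -> simulated estep e f).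
  { intros e f H.
    apply (sim_intro estep (fun x y => simulated pstep (emb x) (emb y))); [exact H|].
    intros s t a s' Hs Hst. apply Hiff in Hst.
    destruct (sim_step _ _ _ _ _ Hs Hst) as [t' [Ht Hs']].
    destruct (Hcl _ _ _ Ht) as [t'' ->]. apply Hiff in Ht. eauto. }
  intros e f.
  assert (Hfwd : simulated estep e f -> rel_incl (le_ji pstep estep f) (le_ji pstep estep e)).
  { intros H p q Hpq. apply Hchar. apply Hchar in Hpq.
    eapply sim_trans; [apply Hmono; exact H|exact Hpq]. }
  assert (Hback : le_ji pstep estep e u (emb f) -> simulated estep e f).
  { intro H. apply Hchar in H. apply Hrefl_emb.
    eapply sim_trans; [apply Hue|exact H]. }
  assert (Huf : le_ji pstep estep f u (emb f)).
  { apply Hchar. apply (sim_intro pstep (fun a b => exists x, a = jn x b)); [eauto|].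
    intros s t a s' [y' ->] Hs. apply Hj in Hs.
    destruct Hs as [s1 [s2 [H1 [H2 ->]]]]. eauto. }
  split; [|split].
  - split; [exact Hfwd|]. intro H. apply Hback, H, Huf.
  - split.
    + intros H p q Hpq. unfold ge_ji in *. apply Hfwd; assumption.
    + intro H. apply Hback. apply (H (emb f) u). exact Huf.
  - split.
    + intros H p q [H1 H2]. split; apply Hfwd; assumption.
    + intro H. apply Hback. apply (H u (emb f)). split; [exact Huf|].
      apply Hchar. apply Htop.
Qed.
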